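(* Let $G$ be a finitely generated left-orderable group acting co-finitely, minimally and with general type on a simplicial tree $T$, such that some edge of $T$ has trivial stabilizer and all vertex stabilizers are finitely generated. Then $G$ is Hucha with respect to the family consisting of all cyclic subgroups of $G$ and all subgroups of $G$ acting elliptically on $T$.
   Context: Actions on trees are without edge inversions. Co-finite: finitely many orbits of vertices and edges. Minimal: $T$ is the only $G$-invariant subtree. General type: $G$ fixes no vertex and no end of $T$ and the orbit of a vertex meets at least three ends (ends being classes of rays with infinite intersection; $G$ fixes an end if some ray $p$ has $gp\cap p$ infinite for all $g$). A subgroup acts elliptically if it fixes a vertex. Hucha: a positive cone is a subsemigroup $P$ with $G=P\sqcup P^{-1}\sqcup\{1\}$. For a finite generating set $X$ with word metric $d_X$, an $r$-path is a sequence $g_0,\dots,g_n$ with $d_X(g_i,g_{i+1})\le r$; $S$ $r$-disconnects $H_1,H_2$ if every $r$-path from $H_1$ to $H_2$ meets $S$, and $r$-disconnects $P$ if it $r$-disconnects $\{u\},\{v\}$ for some $u,v\in P$. A negative swamp of width $r$ for a subgroup $H$ is $S\subseteq P^{-1}$ that $r$-disconnects $P$ and $r$-disconnects $g_1H,g_2H$ for some $g_1,g_2\in G$. $G$ is Hucha with respect to a family $\mathcal{H}$ if for some (equivalently any) finite generating set, for every positive cone $P$, every $H\in\mathcal{H}$ and every $r>0$ there is a negative swamp of width $r$ for $H$. *)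

(* Defs.v *)
From Stdlib Require Import List Arith.
Import ListNotations.

Set Implicit Arguments.
Unset Strict Implicit.

Record Group := Group_mk {
  gcar :> Type;
  gmul : gcar -> gcar -> gcar;
  gone : gcar;
  ginv : gcar -> gcar;
  gassoc : forall a b c, gmul a (gmul b c) = gmul (gmul a b) c;
  gmul1l : forall a, gmul gone a = a;
  gmul1r : forall a, gmul a gone = a;
  gmulVl : forall a, gmul (ginv a) a = gone;
  gmulVr : forall a, gmul a (ginv a) = gone
}.

Arguments gmul {g} _ _.
Arguments ginv {g} _.
Arguments gone g : clear implicits.

Section GroupDefs.
Variable G : Group.

Fixpoint word_eval (w : list (G * bool)) : G :=
  match w with
  | [] => gone G
  | (x, b) :: w' => gmul (if b then x else ginv x) (word_eval w')
  end.

Definition word_over (X : list G) (w : list (G * bool)) : Prop :=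
  forall a, In a w -> In (fst a) X.

Definition generating_set (X : list G) : Prop :=
  forall g : G, exists w, word_over X w /\ g = word_eval w.

Definition finitely_generated : Prop := exists X : list G, generating_set X.

Definition word_dist_le (X : list G) (g h : G) (r : nat) : Prop :=
  exists w, word_over X w /\ length w <= r /\ gmul (ginv g) h = word_eval w.

Definition subgroup (H : G -> Prop) : Prop :=
  H (gone G) /\ (forall a b, H a -> H b -> H (gmul a b)) /\
  (forall a, H a -> H (ginv a)).

Definition fg_subgroup (H : G -> Prop) : Prop :=
  subgroup H /\
  exists X : list G, (forall x, In x X -> H x) /\
    forall h, H h <-> exists w, word_over X w /\ h = word_eval w.

Fixpoint gpow (g : G) (n : nat) : G :=
  match n with 0 => gone G | S n' => gmul g (gpow g n') end.

Definition cyclic_subgroup (H : G -> Prop) : Prop :=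
  exists g : G, forall x, H x <-> exists n, x = gpow g n \/ x = gpow (ginv g) n.

Definition left_orderable : Prop :=
  exists lt : G -> G -> Prop,
    (forall a, ~ lt a a) /\
    (forall a b c, lt a b -> lt b c -> lt a c) /\
    (forall a b, a <> b -> lt a b \/ lt b a) /\
    (forall g a b, lt a b -> lt (gmul g a) (gmul g b)).

Definition positive_cone (P : G -> Prop) : Prop :=
  (forall a b, P a -> P b -> P (gmul a b)) /\
  (forall g, P g \/ P (ginv g) \/ g = gone G) /\
  (forall g, ~ (P g /\ P (ginv g))) /\
  (forall g, ~ (P g /\ g = gone G)) /\
  (forall g, ~ (P (ginv g) /\ g = gone G)).

Definition r_path (X : list G) (r : nat) (f : nat -> G) (n : nat) : Prop :=
  forall i, i < n -> word_dist_le X (f i) (f (S i)) r.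

Definition r_disconnects (X : list G) (r : nat) (S H1 H2 : G -> Prop) : Prop :=
  forall f n, r_path X r f n -> H1 (f 0) -> H2 (f n) ->
    exists i, i <= n /\ S (f i).

Definition r_disconnects_set (X : list G) (r : nat) (S A : G -> Prop) : Prop :=
  exists u v, A u /\ A v /\ r_disconnects X r S (fun x => x = u) (fun x => x = v).

Definition lcoset (g : G) (H : G -> Prop) : G -> Prop :=
  fun x => exists h, H h /\ x = gmul g h.

Definition negative_swamp (X : list G) (P : G -> Prop) (r : nat)
    (H S : G -> Prop) : Prop :=
  (forall s, S s -> P (ginv s)) /\
  r_disconnects_set X r S P /\
  exists g1 g2, r_disconnects X r S (lcoset g1 H) (lcoset g2 H).

(* Hucha with respect to a family of subgroups (stated for every finite
   generating set; the paper notes "some" and "any" are equivalent). *)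
Definition Hucha (fam : (G -> Prop) -> Prop) : Prop :=
  forall X : list G, generating_set X ->
  forall P, positive_cone P ->
  forall H, fam H ->
  forall r : nat, 0 < r ->
  exists S : G -> Prop, negative_swamp X P r H S.

End GroupDefs.

Section Trees.
Variable V : Type.
Variable adj : V -> V -> Prop.

Definition walk (p : nat -> V) (n : nat) : Prop :=
  forall i, i < n -> adj (p i) (p (S i)).

Definition graph_connected : Prop :=
  forall u v, exists p n, walk p n /\ p 0 = u /\ p n = v.

Definition no_cycle : Prop :=
  forall p n, 3 <= n -> walk p n -> p 0 = p n ->
    exists i j, i < j < n /\ p i = p j.

Definition simplicial_tree : Prop :=
  (forall u v, adj u v -> adj v u) /\
  (forall u, ~ adj u u) /\
  graph_connected /\ no_cycle.

Definition subtree (S : V -> Prop) : Prop :=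
  (exists v, S v) /\
  forall u v, S u -> S v ->
    exists p n, walk p n /\ p 0 = u /\ p n = v /\ forall i, i <= n -> S (p i).

Definition ray (p : nat -> V) : Prop :=
  (forall n, adj (p n) (p (S n))) /\ (forall n m, p n = p m -> n = m).

Definition infinite_inter (p q : nat -> V) : Prop :=
  forall N, exists n m, N <= n /\ p n = q m.

(* z lies on the geodesic from x to y (every walk from x to y meets z) *)
Definition between (x y z : V) : Prop :=
  forall p n, walk p n -> p 0 = x -> p n = y -> exists i, i <= n /\ p i = z.

End Trees.

Section Actions.
Variable G : Group.
Variable V : Type.
Variable adj : V -> V -> Prop.
Variable act : G -> V -> V.

Definition tree_action : Prop :=
  (forall v, act (gone G) v = v) /\
  (forall g h v, act (gmul g h) v = act g (act h v)) /\
  (forall g u v, adj u v -> adj (act g u) (act g v)) /\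
  (forall g u v, adj u v -> ~ (act g u = v /\ act g v = u)).

Definition cofinite_action : Prop :=
  (exists lv : list V, forall v, exists w g, In w lv /\ act g w = v) /\
  (exists le : list (V * V), forall u v, adj u v ->
     exists e g, In e le /\
       ((act g (fst e) = u /\ act g (snd e) = v) \/
        (act g (fst e) = v /\ act g (snd e) = u))).

Definition minimal_action : Prop :=
  forall S : V -> Prop, subtree adj S ->
    (forall g v, S v -> S (act g v)) -> forall v, S v.

Definition fixes_vertex : Prop := exists v, forall g, act g v = v.

Definition fixes_end : Prop :=
  exists p, ray adj p /\ forall g, infinite_inter (fun n => act g (p n)) p.

Definition orbit_meets_end (v : V) (p : nat -> V) : Prop :=
  forall N, exists g, between adj (p 0) (act g v) (p N).

Definition general_type : Prop :=
  ~ fixes_vertex /\ ~ fixes_end /\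
  exists v p1 p2 p3,
    ray adj p1 /\ ray adj p2 /\ ray adj p3 /\
    ~ infinite_inter p1 p2 /\ ~ infinite_inter p1 p3 /\ ~ infinite_inter p2 p3 /\
    orbit_meets_end v p1 /\ orbit_meets_end v p2 /\ orbit_meets_end v p3.

Definition vertex_stab (v : V) : G -> Prop := fun g => act g v = v.

Definition edge_stab (u v : V) : G -> Prop :=
  fun g => (act g u = u /\ act g v = v) \/ (act g u = v /\ act g v = u).

Definition acts_elliptically (H : G -> Prop) : Prop :=
  exists v, forall h, H h -> act h v = v.

End Actions.

(* Main.v *)
Require Import Defs.
From Stdlib Require Import List Arith.
From Stdlib Require Import Lia Classical.
Import ListNotations.

Section GroupLemmas.
Variable G : Group.
Notation "x ** y" := (@gmul G x y) (at level 40, left associativity).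
Notation one := (gone G).

Lemma g_assoc (x y z : G) : x ** (y ** z) = x ** y ** z.
Proof. apply gassoc. Qed.
Lemma g_1l (x : G) : one ** x = x. Proof. apply gmul1l. Qed.
Lemma g_1r (x : G) : x ** one = x. Proof. apply gmul1r. Qed.
Lemma g_Vl (x : G) : ginv x ** x = one. Proof. apply gmulVl. Qed.
Lemma g_Vr (x : G) : x ** ginv x = one. Proof. apply gmulVr. Qed.

Lemma g_cancel_l (g x y : G) : g ** x = g ** y -> x = y.
Proof.
  intro H. rewrite <- (g_1l x), <- (g_1l y), <- (g_Vl g), <- !g_assoc, H. reflexivity.
Qed.

Lemma g_inv_unique (x y : G) : x ** y = one -> y = ginv x.
Proof.
  intro H. apply (g_cancel_l x). rewrite H, g_Vr. reflexivity.
Qed.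

Lemma g_inv_inv (x : G) : ginv (ginv x) = x.
Proof. symmetry. apply g_inv_unique. apply g_Vl. Qed.

Lemma g_inv_mul (x y : G) : ginv (x ** y) = ginv y ** ginv x.
Proof.
  symmetry. apply g_inv_unique.
  rewrite g_assoc, <- (g_assoc x y), g_Vr, g_1r, g_Vr. reflexivity.
Qed.

Lemma g_inv_one : ginv one = one.
Proof. symmetry. apply g_inv_unique. apply g_1l. Qed.

Lemma g_VK (x y : G) : ginv x ** (x ** y) = y.
Proof. rewrite g_assoc, g_Vl, g_1l. reflexivity. Qed.
Lemma g_KV (x y : G) : x ** (ginv x ** y) = y.
Proof. rewrite g_assoc, g_Vr, g_1l. reflexivity. Qed.
Lemma g_mulKr (x y : G) : x ** y ** ginv y = x.
Proof. rewrite <- g_assoc, g_Vr, g_1r. reflexivity. Qed.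
Lemma g_mulVKr (x y : G) : x ** ginv y ** y = x.
Proof. rewrite <- g_assoc, g_Vl, g_1r. reflexivity. Qed.

Lemma gpow_S_r (g : G) n : gpow g (S n) = gpow g n ** g.
Proof.
  induction n; simpl.
  - rewrite g_1r, g_1l. reflexivity.
  - simpl in IHn. rewrite IHn at 1. apply g_assoc.
Qed.

Lemma gpow_add (g : G) n m : gpow g (n + m) = gpow g n ** gpow g m.
Proof.
  induction n; simpl.
  - rewrite g_1l. reflexivity.
  - rewrite IHn. apply g_assoc.
Qed.

Lemma gpow_cancel (g : G) n : gpow g n ** gpow (ginv g) n = one.
Proof.
  induction n.
  - simpl. apply g_1l.
  - rewrite (gpow_S_r (ginv g) n). simpl.
    rewrite g_assoc, <- (g_assoc g (gpow g n)), IHn, g_1r, g_Vr. reflexivity.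
Qed.

Lemma gpow_inv (g : G) n : gpow (ginv g) n = ginv (gpow g n).
Proof. apply g_inv_unique. apply gpow_cancel. Qed.

Lemma gpow_one n : gpow one n = one.
Proof. induction n; simpl; [reflexivity| rewrite IHn; apply g_1l]. Qed.

End GroupLemmas.

Section Order.
Variable G : Group.
Variable P : G -> Prop.
Hypothesis HP : positive_cone P.
Notation "x ** y" := (@gmul G x y) (at level 40, left associativity).
Notation one := (gone G).

Definition glt (x y : G) : Prop := P (ginv x ** y).
Definition gle (x y : G) : Prop := x = y \/ glt x y.

Lemma P_mul x y : P x -> P y -> P (x ** y).
Proof. destruct HP as [H _]. apply H. Qed.

Lemma glt_irr x : ~ glt x x.
Proof.
  unfold glt. rewrite g_Vl. destruct HP as [_ [_ [_ [H _]]]]. intro Hp. apply (H one). auto.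
Qed.

Lemma glt_trans x y z : glt x y -> glt y z -> glt x z.
Proof.
  unfold glt. intros H1 H2. pose proof (P_mul _ _ H1 H2) as H.
  rewrite <- g_assoc, g_KV in H. exact H.
Qed.

Lemma glt_total x y : x <> y -> glt x y \/ glt y x.
Proof.
  intro Hne. destruct HP as [_ [H _]]. unfold glt.
  destruct (H (ginv x ** y)) as [A|[A|A]].
  - left; auto.
  - right. rewrite g_inv_mul, g_inv_inv in A. auto.
  - exfalso. apply Hne. rewrite <- (g_KV G x y), A, g_1r. reflexivity.
Qed.

Lemma glt_mul g x y : glt x y -> glt (g ** x) (g ** y).
Proof. unfold glt. rewrite g_inv_mul, <- g_assoc, g_VK. auto. Qed.

Lemma glt_mul_inv g x y : glt (g ** x) (g ** y) -> glt x y.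
Proof. unfold glt. rewrite g_inv_mul, <- g_assoc, g_VK. auto. Qed.

Lemma P_glt g : P g <-> glt one g.
Proof. unfold glt. rewrite g_inv_one, g_1l. tauto. Qed.

Lemma gle_mul g x y : gle x y -> gle (g ** x) (g ** y).
Proof. intros [->|H]; [left; auto|right; apply glt_mul; auto]. Qed.

Lemma gle_trans x y z : gle x y -> gle y z -> gle x z.
Proof.
  intros [E1|H1] [E2|H2]; subst; [left; reflexivity|right; auto|right; auto|right; eapply glt_trans; eauto].
Qed.

Lemma gle_lt_trans x y z : gle x y -> glt y z -> glt x z.
Proof. intros [->|H1] H2; eauto using glt_trans. Qed.

Lemma glt_le_trans x y z : glt x y -> gle y z -> glt x z.
Proof. intros H1 [->|H2]; eauto using glt_trans. Qed.

Lemma not_glt_le x y : ~ glt x y -> gle y x.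
Proof.
  intro H. destruct (classic (x = y)) as [->|Hne]; [left; auto|].
  destruct (glt_total x y Hne); [contradiction|right; auto].
Qed.

Lemma glt_not_le x y : glt x y -> ~ gle y x.
Proof. intros H1 H2. apply (glt_irr x). eapply glt_le_trans; eauto. Qed.

Lemma bound_list (l : list G) : exists M, forall c, In c l -> gle c M.
Proof.
  induction l as [|c l [M HM]].
  - exists one. intros c [].
  - destruct (classic (glt M c)) as [H|H].
    + exists c. intros d [<-|Hd]; [left; auto|]. right. eapply gle_lt_trans; eauto.
    + exists M. intros d [<-|Hd]; auto. apply not_glt_le. auto.
Qed.

Lemma glt_mul_r_pos M q : P q -> glt M (M ** q).
Proof. intro Hq. unfold glt. rewrite g_VK. auto. Qed.

Lemma unbounded (Rs : G -> Prop) (k q : G) : (forall g, Rs g \/ Rs (k ** g)) -> P q ->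
  forall N, exists g, Rs g /\ glt N g.
Proof.
  intros Hcov Hq N. apply NNPP. intro Hno.
  assert (Hle : forall g, Rs g -> gle g N).
  { intros g Hg. apply not_glt_le. intro Hlt. apply Hno. eauto. }
  destruct (bound_list [N; ginv k ** N]) as [M HM].
  assert (HM1 : gle N M) by (apply HM; left; auto).
  assert (HM2 : gle (ginv k ** N) M) by (apply HM; right; left; auto).
  set (g := M ** q).
  assert (Hg : glt M g) by (apply glt_mul_r_pos; auto).
  destruct (Hcov g) as [H|H].
  - apply (glt_not_le M g Hg). eapply gle_trans; eauto.
  - apply Hle in H. apply (gle_mul (ginv k)) in H. rewrite g_VK in H.
    apply (glt_not_le M g Hg). eapply gle_trans; eauto.
Qed.

Lemma gpow_glt h : glt one h -> forall i j, i < j -> glt (gpow h i) (gpow h j).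
Proof.
  intros Hh i j Hij. induction Hij.
  - rewrite gpow_S_r. rewrite <- (g_1r G (gpow h i)) at 1. apply glt_mul. auto.
  - eapply glt_trans; eauto. rewrite gpow_S_r. rewrite <- (g_1r G (gpow h m)) at 1. apply glt_mul. auto.
Qed.

Lemma gpow_inj h : glt one h -> forall i j, gpow h i = gpow h j -> i = j.
Proof.
  intros Hh i j E. destruct (lt_eq_lt_dec i j) as [[H|H]|H]; auto; exfalso.
  - first [assert (Hl : glt (gpow h i) (gpow h j)) by (apply gpow_glt; [exact Hh|lia]) | assert (Hl : glt (gpow h j) (gpow h i)) by (apply gpow_glt; [exact Hh|lia])]; rewrite E in Hl; exact (glt_irr _ Hl).
  - first [assert (Hl : glt (gpow h i) (gpow h j)) by (apply gpow_glt; [exact Hh|lia]) | assert (Hl : glt (gpow h j) (gpow h i)) by (apply gpow_glt; [exact Hh|lia])]; rewrite E in Hl; exact (glt_irr _ Hl).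
Qed.

Lemma gle_one_pow h n : glt one h -> gle one (gpow h n).
Proof.
  intro Hh. destruct n; [left; reflexivity|]. right. apply (gpow_glt h Hh 0). lia.
Qed.

Lemma gle_inv_pow h n : glt one h -> gle (gpow (ginv h) n) one.
Proof.
  intro Hh. rewrite gpow_inv. destruct (gle_one_pow h n Hh) as [E|E].
  - left. rewrite <- E. apply g_inv_one.
  - right. unfold glt in *. rewrite g_inv_inv, g_1r. rewrite g_inv_one, g_1l in E. auto.
Qed.

End Order.



Lemma first_change (Q : nat -> Prop) n : Q 0 -> ~ Q n -> exists s, s < n /\ Q s /\ ~ Q (S s).
Proof.
  induction n; intros H0 Hn.
  - contradiction.
  - destruct (classic (Q n)) as [Hq|Hq].
    + exists n. split; [lia| auto].
    + destruct (IHn H0 Hq) as [s [? ?]]. exists s. split; [lia|auto].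
Qed.

Lemma min_exists (P : nat -> Prop) : (exists n, P n) -> exists n, P n /\ forall m, m < n -> ~ P m.
Proof.
  intros [n Hn]. revert Hn. induction n as [n IH] using lt_wf_ind. intro Hn.
  destruct (classic (exists m, m < n /\ P m)) as [[m [Hm Pm]]|Hno].
  - exact (IH m Hm Pm).
  - exists n. split; auto. intros m Hm Pm. apply Hno. eauto.
Qed.

Section Main.

Variable G : Group.
Variable V : Type.
Variable adj : V -> V -> Prop.
Variable act : G -> V -> V.
Hypothesis adj_sym : forall u v, adj u v -> adj v u.
Hypothesis adj_irr : forall u, ~ adj u u.
Hypothesis conn : graph_connected adj.
Hypothesis nocyc : no_cycle adj.
Hypothesis act1 : forall v, act (gone G) v = v.
Hypothesis actM : forall g h v, act (gmul g h) v = act g (act h v).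
Hypothesis actAdj : forall g u v, adj u v -> adj (act g u) (act g v).
Hypothesis Hminimal : minimal_action adj act.
Hypothesis Hnfe : ~ fixes_end adj act.

Notation "x ** y" := (@gmul G x y) (at level 40, left associativity).
Notation one := (gone G).



Definition isedge (u w y y' : V) : Prop := (y = u /\ y' = w) \/ (y = w /\ y' = u).

Definition avoid (u w : V) (p : nat -> V) (n : nat) : Prop :=
  forall i, i < n -> ~ isedge u w (p i) (p (S i)).

Definition Half (u w y : V) : Prop :=
  exists p n, walk adj p n /\ p 0 = w /\ p n = y /\ avoid u w p n.

Definition injw (p : nat -> V) n : Prop := forall i j, i <= n -> j <= n -> p i = p j -> i = j.

Definition catw (p : nat -> V) n (q : nat -> V) : nat -> V :=
  fun i => if i <=? n then p i else q (i - n).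

Lemma catw_steps p n q m i : p n = q 0 -> i < n + m ->
  (i < n /\ catw p n q i = p i /\ catw p n q (S i) = p (S i)) \/
  (i - n < m /\ catw p n q i = q (i - n) /\ catw p n q (S i) = q (S (i - n))).
Proof.
  intros Hj Hi. unfold catw.
  destruct (Nat.leb_spec i n); destruct (Nat.leb_spec (S i) n).
  - left. split; [lia|auto].
  - assert (i = n) by lia. subst i. right. rewrite Nat.sub_diag.
    replace (S n - n) with 1 by lia. split; [lia|auto].
  - lia.
  - right. replace (S i - n) with (S (i - n)) by lia. split; [lia|auto].
Qed.

Lemma walk_cat p n q m : walk adj p n -> walk adj q m -> p n = q 0 -> walk adj (catw p n q) (n + m).
Proof.
  intros Hp Hq Hj i Hi. destruct (catw_steps p n q m i Hj Hi) as [[? [-> ->]]|[? [-> ->]]]; auto.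
Qed.

Lemma avoid_cat u w p n q m : avoid u w p n -> avoid u w q m -> p n = q 0 -> avoid u w (catw p n q) (n + m).
Proof.
  intros Hp Hq Hj i Hi. destruct (catw_steps p n q m i Hj Hi) as [[? [-> ->]]|[? [-> ->]]]; auto.
Qed.

Lemma catw_0 p n q : catw p n q 0 = p 0.
Proof. reflexivity. Qed.
Lemma catw_end p n q m : p n = q 0 -> catw p n q (n + m) = q m.
Proof.
  intro Hj. unfold catw. destruct (Nat.leb_spec (n + m) n).
  - assert (m = 0) by lia. subst. rewrite Nat.add_0_r. auto.
  - f_equal. lia.
Qed.

Definition revw (p : nat -> V) n : nat -> V := fun i => p (n - i).

Lemma walk_rev p n : walk adj p n -> walk adj (revw p n) n.
Proof.
  intros Hp i Hi. unfold revw. apply adj_sym.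
  replace (n - i) with (S (n - S i)) by lia. apply Hp. lia.
Qed.

Lemma avoid_rev u w p n : avoid u w p n -> avoid u w (revw p n) n.
Proof.
  intros Hp i Hi. unfold revw. replace (n - i) with (S (n - S i)) by lia.
  intro He. apply (Hp (n - S i)); [lia|]. unfold isedge in *. tauto.
Qed.

Lemma Half_refl u w : Half u w w.
Proof.
  exists (fun _ => w), 0. repeat split; auto.
  - intros i Hi; lia.
  - intros i Hi; lia.
Qed.

Lemma Half_prefix u w p n m : walk adj p n -> p 0 = w -> avoid u w p n -> m <= n -> Half u w (p m).
Proof.
  intros Hw H0 Ha Hm. exists p, m. repeat split; auto.
  - intros i Hi. apply Hw. lia.
  - intros i Hi. apply Ha. lia.
Qed.

Lemma Half_step u w y y' : Half u w y -> adj y y' -> ~ isedge u w y y' -> Half u w y'.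
Proof.
  intros [p [n [Hw [H0 [Hn Ha]]]]] Hadj Hne.
  exists (catw p n (fun i => if i =? 0 then y else y')), (n + 1).
  repeat split.
  - apply walk_cat; auto.
    + intros i Hi. assert (i = 0) by lia. subst. simpl. auto.
  - rewrite catw_0. auto.
  - rewrite catw_end; auto.
  - apply avoid_cat; auto.
    intros i Hi. assert (i = 0) by lia. subst. simpl. auto.
Qed.

Lemma cross_in u w y y' : adj y y' -> ~ Half u w y -> Half u w y' -> y = u /\ y' = w.
Proof.
  intros Hadj Hn Hy.
  destruct (classic (isedge u w y' y)) as [[[-> ->]|[-> ->]]|Hne].
  - exfalso. apply Hn. apply Half_refl.
  - auto.
  - exfalso. apply Hn. eapply Half_step; eauto.
Qed.

Lemma cross_out u w y y' : adj y y' -> Half u w y -> ~ Half u w y' -> y = w /\ y' = u.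
Proof.
  intros Hadj Hy Hn. destruct (cross_in u w y' y (adj_sym _ _ Hadj) Hn Hy). auto.
Qed.

Lemma walk_exit u w p n : walk adj p n -> Half u w (p 0) -> ~ Half u w (p n) ->
  exists s, s < n /\ p s = w /\ p (S s) = u.
Proof.
  intros Hw H0 Hn. destruct (first_change (fun i => Half u w (p i)) n H0 Hn) as [s [Hs [A B]]].
  exists s. split; auto. apply cross_out; auto.
Qed.

Lemma walk_enter u w p n : walk adj p n -> ~ Half u w (p 0) -> Half u w (p n) ->
  exists s, s < n /\ p s = u /\ p (S s) = w.
Proof.
  intros Hw H0 Hn.
  destruct (first_change (fun i => ~ Half u w (p i)) n H0 (fun H => H Hn)) as [s [Hs [A B]]].
  exists s. split; auto. apply cross_in; auto. apply NNPP; auto.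
Qed.

Lemma partition u w y : adj u w -> Half u w y \/ Half w u y.
Proof.
  intro Huw. destruct (conn w y) as [p [n [Hw [H0 Hn]]]]. subst y.
  assert (forall i, i <= n -> Half u w (p i) \/ Half w u (p i)) as K.
  { induction i; intro Hi.
    - left. rewrite H0. apply Half_refl.
    - assert (Hst : adj (p i) (p (S i))) by (apply Hw; lia).
      destruct (classic (isedge u w (p i) (p (S i)))) as [[[_ E]|[_ E]]|Hne].
      + left. rewrite E. apply Half_refl.
      + right. rewrite E. apply Half_refl.
      + destruct (IHi ltac:(lia)) as [Hh|Hh].
        * left. eapply Half_step; eauto.
        * right. eapply Half_step; eauto. unfold isedge in *. tauto. }
  apply K. lia.
Qed.

Definition stepsub (p' : nat -> V) n' (p : nat -> V) n : Prop :=
  forall k, k < n' -> exists k', k' < n /\ p' k = p k' /\ p' (S k) = p (S k').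

Lemma shortcut p n i j : i < j -> j <= n -> p i = p j ->
  exists p', stepsub p' (n - (j - i)) p n /\ p' 0 = p 0 /\ p' (n - (j - i)) = p n.
Proof.
  intros Hij Hjn He.
  exists (fun k => if k <=? i then p k else p (k + (j - i))). split; [|split].
  - intros k Hk. destruct (Nat.leb_spec k i); destruct (Nat.leb_spec (S k) i).
    + exists k. split; [lia|auto].
    + assert (k = i) by lia. subst k. exists j. split; [lia|]. split; auto.
      f_equal. lia.
    + lia.
    + exists (k + (j - i)). split; [lia|]. split; auto.
  - simpl. reflexivity.
  - destruct (Nat.leb_spec (n - (j - i)) i).
    + assert (j = n) by lia. subst j. replace (n - (n - i)) with i by lia. auto.
    + f_equal. lia.
Qed.

Lemma stepsub_walk p' n' p n : stepsub p' n' p n -> walk adj p n -> walk adj p' n'.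
Proof.
  intros Hs Hw k Hk. destruct (Hs k Hk) as [k' [? [-> ->]]]. auto.
Qed.

Lemma stepsub_avoid u w p' n' p n : stepsub p' n' p n -> avoid u w p n -> avoid u w p' n'.
Proof.
  intros Hs Hw k Hk. destruct (Hs k Hk) as [k' [? [-> ->]]]. auto.
Qed.

Lemma disjoint u w y : adj u w -> ~ (Half u w y /\ Half w u y).
Proof.
  intros Huw [[p [n [Hw [H0 [Hn Ha]]]]] [q [m [Hw' [H0' [Hm Ha']]]]]].
  assert (Hex : exists k, exists r, walk adj r k /\ r 0 = w /\ r k = u /\ avoid u w r k).
  { exists (n + m), (catw p n (revw q m)). repeat split.
    - apply walk_cat; auto. apply walk_rev; auto. unfold revw. rewrite Nat.sub_0_r. congruence.
    - rewrite catw_0. auto.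
    - rewrite catw_end. unfold revw. rewrite Nat.sub_diag. auto.
      unfold revw. rewrite Nat.sub_0_r. congruence.
    - apply avoid_cat; auto.
      + apply avoid_rev. intros i Hi He. apply (Ha' i Hi). unfold isedge in *. tauto.
      + unfold revw. rewrite Nat.sub_0_r. congruence. }
  destruct (min_exists _ Hex) as [k [[r [Hr [R0 [Rk Ra]]]] Hmin]].
  destruct k as [|[|k]].
  - match goal with H : adj ?a ?b |- _ => assert (a = b) as E by congruence; rewrite E in H; exact (adj_irr _ H) end.
  - apply (Ra 0); [lia|]. right. split; congruence.
  - set (c := fun i => if i <=? S (S k) then r i else w).
    assert (Hc : walk adj c (S (S (S k)))).
    { intros i Hi. unfold c. destruct (Nat.leb_spec i (S (S k))); destruct (Nat.leb_spec (S i) (S (S k))).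
      - apply Hr. lia.
      - assert (i = S (S k)) by lia. subst i. rewrite Rk. apply adj_sym. auto.
      - lia.
      - lia. }
    assert (Hcl : c 0 = c (S (S (S k)))).
    { unfold c. replace (S (S (S k)) <=? S (S k)) with false by (symmetry; apply Nat.leb_gt; lia). simpl. congruence. }
    destruct (nocyc c (S (S (S k))) ltac:(lia) Hc Hcl) as [i [j [[Hij Hj] Heq]]].
    unfold c in Heq. destruct (Nat.leb_spec i (S (S k))); destruct (Nat.leb_spec j (S (S k))); try lia.
    destruct (shortcut r (S (S k)) i j Hij ltac:(lia) Heq) as [r' [Hs [E0 En]]].
    apply (Hmin (S (S k) - (j - i))); [lia|].
    exists r'. repeat split.
    + eapply stepsub_walk; eauto.
    + congruence.
    + congruence.
    + eapply stepsub_avoid; eauto.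
Qed.

Lemma exists_inj_walk x y : exists p n, walk adj p n /\ p 0 = x /\ p n = y /\ injw p n.
Proof.
  assert (Hex : exists k, exists p, walk adj p k /\ p 0 = x /\ p k = y).
  { destruct (conn x y) as [p [n ?]]. eauto. }
  destruct (min_exists _ Hex) as [k [[p [Hp [P0 Pk]]] Hmin]].
  exists p, k. repeat split; auto.
  intros i j Hi Hj He.
  destruct (lt_eq_lt_dec i j) as [[Hlt|Heq]|Hlt]; auto; exfalso.
  - destruct (shortcut p k i j Hlt Hj He) as [p' [Hs [E0 En]]].
    apply (Hmin (k - (j - i))); [lia|]. exists p'. repeat split; try congruence.
    eapply stepsub_walk; eauto.
  - destruct (shortcut p k j i Hlt Hi (eq_sym He)) as [p' [Hs [E0 En]]].
    apply (Hmin (k - (i - j))); [lia|]. exists p'. repeat split; try congruence.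
    eapply stepsub_walk; eauto.
Qed.

Lemma convex u w p n : adj u w -> walk adj p n -> injw p n -> Half u w (p 0) -> Half u w (p n) ->
  forall i, i <= n -> Half u w (p i).
Proof.
  intros Huw Hw Hinj H0 Hn i Hi. apply NNPP. intro Hni.
  assert (Hw1 : walk adj p i) by (intros k Hk; apply Hw; lia).
  destruct (walk_exit u w p i Hw1 H0 Hni) as [s [Hs [Ps Ps']]].
  set (q := fun k => p (k + i)).
  assert (Hw2 : walk adj q (n - i)) by (intros k Hk; unfold q; simpl; apply Hw; lia).
  destruct (walk_enter u w q (n - i) Hw2) as [s' [Hs' [Qs Qs']]].
  { unfold q. simpl. auto. }
  { unfold q. replace (n - i + i) with n by lia. auto. }
  unfold q in Qs, Qs'. simpl in Qs'.
  assert (s = S (s' + i)) by (apply Hinj; [lia|lia|congruence]). lia.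
Qed.

Lemma nesting u1 w1 u2 w2 : adj u1 w1 -> adj u2 w2 -> Half u1 w1 u2 -> Half u1 w1 w2 ->
  (forall y, Half u2 w2 y -> Half u1 w1 y) \/ (forall y, Half w2 u2 y -> Half u1 w1 y).
Proof.
  intros H1 H2 Hu2 Hw2.
  destruct (partition u2 w2 u1 H2) as [Hu1|Hu1].
  - right. intros y [p [n [Hw [P0 [Pn Pa]]]]]. apply NNPP. intro Hny.
    destruct (walk_exit u1 w1 p n Hw) as [s [Hs [Ps Ps']]]; [congruence|congruence|].
    apply (disjoint u2 w2 u1 H2). split; auto.
    rewrite <- Ps'. apply (Half_prefix w2 u2 p n); auto; lia.
  - left. intros y [p [n [Hw [P0 [Pn Pa]]]]]. apply NNPP. intro Hny.
    destruct (walk_exit u1 w1 p n Hw) as [s [Hs [Ps Ps']]]; [congruence|congruence|].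
    apply (disjoint u2 w2 u1 H2). split; auto.
    rewrite <- Ps'. apply (Half_prefix u2 w2 p n); auto; lia.
Qed.

Lemma Half_compl u w y : adj u w -> ~ Half u w y -> Half w u y.
Proof. intros H Hn. destruct (partition u w y H); tauto. Qed.

Lemma four_case u1 w1 u2 w2 : adj u1 w1 -> adj u2 w2 ->
  (forall y, ~ (Half u1 w1 y /\ Half u2 w2 y)) \/
  (forall y, Half u1 w1 y -> Half u2 w2 y) \/
  (forall y, Half u2 w2 y -> Half u1 w1 y) \/
  (forall y, Half u1 w1 y \/ Half u2 w2 y).
Proof.
  intros H1 H2.
  assert (H1' : adj w1 u1) by auto. assert (H2' : adj w2 u2) by auto.
  destruct (classic (Half u1 w1 u2)) as [A|A]; destruct (classic (Half u1 w1 w2)) as [B|B].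
  - destruct (nesting u1 w1 u2 w2 H1 H2 A B) as [N|N].
    + right. right. left. auto.
    + right. right. right. intro y. destruct (partition u2 w2 y H2); auto.
  - destruct (cross_out u1 w1 u2 w2 H2 A B) as [-> ->].
    left. intros y [Y1 Y2]. apply (disjoint u1 w1 y H1). auto.
  - destruct (cross_in u1 w1 u2 w2 H2 A B) as [-> ->].
    right. left. auto.
  - apply Half_compl in A; auto. apply Half_compl in B; auto.
    destruct (nesting w1 u1 u2 w2 H1' H2 A B) as [N|N].
    + left. intros y [Y1 Y2]. apply (disjoint u1 w1 y H1). auto.
    + right. left. intros y Y1. apply NNPP. intro Hn.
      apply Half_compl in Hn; auto. apply N in Hn. apply (disjoint u1 w1 y H1). auto.
Qed.


Lemma act_inv_l g y : act (ginv g) (act g y) = y.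
Proof. rewrite <- actM, g_Vl, act1. reflexivity. Qed.
Lemma act_inv_r g y : act g (act (ginv g) y) = y.
Proof. rewrite <- actM, g_Vr, act1. reflexivity. Qed.
Lemma act_inj g y y' : act g y = act g y' -> y = y'.
Proof. intro H. rewrite <- (act_inv_l g y), <- (act_inv_l g y'), H. reflexivity. Qed.

Lemma walk_act g p n : walk adj p n -> walk adj (fun i => act g (p i)) n.
Proof. intros H i Hi. apply actAdj. auto. Qed.

Lemma avoid_act g u w p n : avoid u w p n -> avoid (act g u) (act g w) (fun i => act g (p i)) n.
Proof.
  intros H i Hi He. apply (H i Hi). unfold isedge in *.
  destruct He as [[E1 E2]|[E1 E2]]; apply act_inj in E1; apply act_inj in E2; auto.
Qed.

Lemma injw_act g p n : injw p n -> injw (fun i => act g (p i)) n.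
Proof. intros H i j Hi Hj E. apply act_inj in E. auto. Qed.

Lemma Half_act g u w y : Half u w y -> Half (act g u) (act g w) (act g y).
Proof.
  intros [p [n [Hw [H0 [Hn Ha]]]]]. exists (fun i => act g (p i)), n.
  repeat split.
  - apply walk_act; auto.
  - simpl. congruence.
  - simpl. congruence.
  - apply avoid_act. auto.
Qed.

Lemma Half_act_iff g u w y : Half u w (act g y) <-> Half (act (ginv g) u) (act (ginv g) w) y.
Proof.
  split; intro H.
  - apply (Half_act (ginv g)) in H. rewrite act_inv_l in H. auto.
  - apply (Half_act g) in H. rewrite !act_inv_r in H. auto.
Qed.

Variable a b : V.
Hypothesis Hab : adj a b.
Hypothesis Hstab : forall g, edge_stab act a b g -> g = one.

Definition Ta y := Half b a y.
Definition Tb y := Half a b y.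

Lemma Hba : adj b a. Proof. auto. Qed.

Lemma Ta_a : Ta a. Proof. apply Half_refl. Qed.
Lemma Tb_b : Tb b. Proof. apply Half_refl. Qed.
Lemma Ta_or_Tb y : Ta y \/ Tb y.
Proof. destruct (partition a b y Hab); unfold Ta, Tb; auto. Qed.
Lemma Ta_Tb_disj y : ~ (Ta y /\ Tb y).
Proof. intros [A B]. apply (disjoint a b y Hab). split; auto. Qed.
Lemma nTa_Tb y : ~ Ta y -> Tb y.
Proof. intro H. destruct (Ta_or_Tb y); tauto. Qed.
Lemma Tb_nTa y : Tb y -> ~ Ta y.
Proof. intros H1 H2. apply (Ta_Tb_disj y). auto. Qed.

Lemma Ta_cross_in y y' : adj y y' -> ~ Ta y -> Ta y' -> y = b /\ y' = a.
Proof. apply cross_in; auto. Qed.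

Lemma edge_cross_trivial g : Ta (act g a) -> ~ Ta (act g b) -> g = one.
Proof.
  intros H1 H2. apply Hstab.
  destruct (cross_out b a (act g a) (act g b) (actAdj g a b Hab) H1 H2) as [E1 E2].
  left. split; auto.
Qed.

Lemma edge_cross_trivial' g : ~ Ta (act g a) -> Ta (act g b) -> g = one.
Proof.
  intros H1 H2. apply Hstab.
  destruct (Ta_cross_in (act g a) (act g b) (actAdj g a b Hab) H1 H2) as [E1 E2].
  right. split; auto.
Qed.

Definition R (h : G) (y : V) := Ta (act h y).

Lemma R_half h y : R h y <-> Half (act (ginv h) b) (act (ginv h) a) y.
Proof. unfold R, Ta. apply Half_act_iff. Qed.

Lemma four_case_R h1 h2 :
  (forall y, ~ (R h1 y /\ R h2 y)) \/
  (forall y, R h1 y -> R h2 y) \/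
  (forall y, R h2 y -> R h1 y) \/
  (forall y, R h1 y \/ R h2 y).
Proof.
  destruct (four_case
    (act (ginv h1) b) (act (ginv h1) a) (act (ginv h2) b) (act (ginv h2) a)
    (actAdj _ _ _ Hba) (actAdj _ _ _ Hba)) as [C|[C|[C|C]]].
  - left. intros y [A B]. apply (C y). split; apply R_half; auto.
  - right; left. intros y A. apply R_half. apply C. apply R_half. auto.
  - right; right; left. intros y A. apply R_half. apply C. apply R_half. auto.
  - right; right; right. intro y. destruct (C y); [left|right]; apply R_half; auto.
Qed.

Lemma walk_enter_R h p n : walk adj p n -> ~ R h (p 0) -> R h (p n) ->
  exists s, s < n /\ p (S s) = act (ginv h) a.
Proof.
  intros Hw H0 Hn.
  destruct (walk_enter (act (ginv h) b) (act (ginv h) a) p n Hw) as [s [Hs [_ E]]].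
  - intro H. apply H0. apply R_half. auto.
  - apply R_half. auto.
  - exists s. auto.
Qed.

Section Chain.
Variable x : G.
Hypothesis X1 : forall y, ~ Ta y -> ~ Ta (act x y).
Hypothesis X2 : ~ Ta (act x a).

Definition Y n y := Ta (act (gpow x n) y).

Lemma Y1_iff y : Y 1 y <-> Ta (act x y).
Proof. unfold Y. simpl. rewrite g_1r. tauto. Qed.

Lemma Y_nest n y : Y (S n) y -> Y n y.
Proof.
  unfold Y. simpl. rewrite actM. intro H. apply NNPP. intro H'. apply (X1 _ H'). auto.
Qed.

Lemma Y_nest_le n m y : n <= m -> Y m y -> Y n y.
Proof.
  induction 1; auto. intro H'. apply IHle. apply Y_nest. auto.
Qed.

Lemma Y_shift n m y : Y n (act (gpow x m) y) <-> Y (n + m) y.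
Proof. unfold Y. rewrite gpow_add, actM. tauto. Qed.

Lemma Y_not_a n : 1 <= n -> ~ Y n a.
Proof. intros Hn H. apply (Y_nest_le 1 n a Hn) in H. apply Y1_iff in H. auto. Qed.

Lemma Y1_cross y y' : adj y y' -> ~ Y 1 y -> Y 1 y' -> y' = act (ginv x) a.
Proof.
  intros Ha H1 H2. rewrite Y1_iff in H1, H2.
  destruct (Ta_cross_in _ _ (actAdj x _ _ Ha) H1 H2) as [_ E].
  rewrite <- E, act_inv_l. reflexivity.
Qed.

Lemma Depth K : forall l p, walk adj p l -> ~ Y 1 (p 0) -> Y K (p l) -> K <= l.
Proof.
  induction K; intros l p Hw H0 HK; [lia|].
  assert (HY1 : Y 1 (p l)) by (apply (Y_nest_le 1 (S K)); auto; lia).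
  destruct (first_change (fun i => ~ Y 1 (p i)) l H0 (fun H => H HY1)) as [s [Hs [A B]]].
  apply NNPP in B.
  assert (E : p (S s) = act (ginv x) a) by (apply (Y1_cross (p s)); auto).
  set (p' := fun i => act x (p (S s + i))).
  assert (Hw' : walk adj p' (l - S s)).
  { intros i Hi. unfold p'. apply actAdj. replace (S s + S i) with (S (S s + i)) by lia.
    apply Hw. lia. }
  assert (K <= l - S s).
  { apply (IHK (l - S s) p' Hw').
    - unfold p'. rewrite Nat.add_0_r, E, act_inv_r. apply Y_not_a. lia.
    - unfold p'. replace (S s + (l - S s)) with l by lia.
      assert (Hs1 : Y (K + 1) (p l)) by (replace (K + 1) with (S K) by lia; auto).
      apply Y_shift in Hs1. simpl in Hs1. rewrite g_1r in Hs1. auto. }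
  lia.
Qed.

Lemma Y_empty w : exists K, forall K', K <= K' -> ~ Y K' w.
Proof.
  destruct (conn a w) as [p [l [Hw [H0 Hl]]]].
  exists (S l). intros K' HK' HY.
  assert (HY' : Y (S l) (p l)) by (rewrite Hl; apply (Y_nest_le _ K'); auto).
  assert (S l <= l); [|lia].
  apply (Depth (S l) l p Hw); auto. rewrite H0. apply Y_not_a. lia.
Qed.


Lemma chain_fixes_end : (forall k, exists y, Ta y /\ Ta (act k y)) -> fixes_end adj act.
Proof.
  intro H0.
  set (z := ginv x).
  destruct (exists_inj_walk a (act z a)) as [q [L [Hq [Q0 [QL Qinj]]]]].
  assert (Taza : Ta (act z a)).
  { apply NNPP; intro H. apply (X1 _ H). unfold z. rewrite act_inv_r. apply Ta_a. }
  assert (HL : 1 <= L).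
  { destruct L; [|lia]. exfalso. apply X2. assert (E : act z a = a) by congruence.
    rewrite <- E. unfold z. rewrite act_inv_r. apply Ta_a. }
  assert (Q1 : forall i, i <= L -> Ta (q i)).
  { apply (convex b a q L Hba Hq Qinj); [rewrite Q0; apply Ta_a| rewrite QL; auto]. }
  assert (Q2 : forall i, i < L -> ~ Ta (act x (q i))).
  { intros i Hi Hy.
    destruct (first_change (fun j => ~ Ta (act x (q j))) i) as [s [Hs [A B]]].
    - rewrite Q0. exact X2.
    - intro H; exact (H Hy).
    - apply NNPP in B.
      destruct (Ta_cross_in _ _ (actAdj x _ _ (Hq s ltac:(lia))) A B) as [_ E].
      assert (E2 : q (S s) = q L).
      { rewrite QL. rewrite <- E. unfold z. rewrite act_inv_l. reflexivity. }
      assert (S s = L) by (apply Qinj; auto; lia). lia. }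
  set (zp := fun k => gpow z k).
  set (p := fun m => act (zp (m / L)) (q (m mod L))).
  assert (PkL : forall k i, i < L -> p (k * L + i) = act (zp k) (q i)).
  { intros k i Hi. unfold p.
    rewrite <- (Nat.div_unique (k * L + i) L k i Hi) by lia.
    rewrite <- (Nat.mod_unique (k * L + i) L k i Hi) by lia. reflexivity. }
  assert (Dec : forall m, exists k i, i < L /\ m = k * L + i).
  { intro m. exists (m / L), (m mod L). split.
    - apply Nat.mod_upper_bound. lia.
    - rewrite (Nat.div_mod m L) at 1 by lia. lia. }
  assert (P1 : forall k y, Ta (act (gpow x k) (act (zp k) y)) <-> Ta y).
  { intros k y. unfold zp, z. rewrite <- actM, gpow_cancel, act1. tauto. }
  assert (P2 : forall k y, Ta (act (gpow x (S k)) (act (zp k) y)) <-> Ta (act x y)).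
  { intros k y. simpl. rewrite actM. unfold zp, z. rewrite <- (actM (gpow x k)), gpow_cancel, act1. tauto. }
  assert (Hadj : forall m, adj (p m) (p (S m))).
  { intro m. destruct (Dec m) as [k [i [Hi ->]]].
    destruct (Nat.eq_dec (S i) L) as [Heq|Hne].
    - replace (S (k * L + i)) with (S k * L + 0) by (simpl; lia).
      rewrite !PkL by lia. rewrite Q0. unfold zp at 2. rewrite gpow_S_r, actM.
      fold (zp k). apply actAdj. rewrite <- QL, <- Heq. apply Hq. lia.
    - replace (S (k * L + i)) with (k * L + S i) by lia.
      rewrite !PkL by lia. apply actAdj. apply Hq. lia. }
  assert (Hinj : forall m m', p m = p m' -> m = m').
  { intros m m' E. destruct (Dec m) as [k [i [Hi ->]]]. destruct (Dec m') as [k' [i' [Hi' ->]]].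
    rewrite !PkL in E by auto.
    assert (Hkk : k = k').
    { destruct (lt_eq_lt_dec k k') as [[Hlt|Heq]|Hlt]; auto; exfalso.
      - apply (Q2 i Hi). apply P2 with (k := k). rewrite E.
        apply (Y_nest_le (S k) k'); [lia|]. unfold Y. apply P1. apply Q1. lia.
      - apply (Q2 i' Hi'). apply P2 with (k := k'). rewrite <- E.
        apply (Y_nest_le (S k') k); [lia|]. unfold Y. apply P1. apply Q1. lia. }
    subst k'. apply act_inj in E. assert (i = i') by (apply Qinj; auto; lia). subst. reflexivity. }
  assert (Hp0 : p 0 = a).
  { replace 0 with (0 * L + 0) by lia. rewrite PkL by lia. rewrite Q0. unfold zp. simpl. apply act1. }
  assert (HpjL : forall j, p (j * L) = act (zp j) a).
  { intro j. replace (j * L) with (j * L + 0) by lia. rewrite PkL by lia. rewrite Q0. reflexivity. }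
  exists p. split; [split; auto|].
  intros g N.
  destruct (Y_empty (act (ginv g) a)) as [K HK].
  set (j := K + N).
  set (h2 := gpow x j ** ginv g).
  assert (Na : ~ R h2 a).
  { unfold R, h2. rewrite actM. apply (HK j). unfold j. lia. }
  set (u0 := act g (act (zp j) a)).
  assert (Ru0 : R h2 u0).
  { unfold R, h2, u0. rewrite actM, act_inv_l. apply P1. apply Ta_a. }
  destruct (Y_empty u0) as [K' HK'].
  set (i := S K').
  assert (Nu0 : ~ R (gpow x i) u0) by (apply (HK' i); unfold i; lia).
  assert (Hinvh2 : ginv h2 = g ** zp j).
  { unfold h2, zp, z. rewrite g_inv_mul, g_inv_inv, gpow_inv. reflexivity. }
  destruct (four_case_R (gpow x i) h2) as [C|[C|[C|C]]].
  - exfalso. destruct (H0 (gpow x i ** (g ** zp j))) as [y [Hy Hky]].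
    apply (C (act (g ** zp j) y)). split.
    + unfold R. rewrite <- actM. auto.
    + unfold R, h2. rewrite <- actM.
      replace (gpow x j ** ginv g ** (g ** zp j)) with (gone G); [rewrite act1; auto|].
      rewrite <- g_assoc, g_VK. unfold zp, z. rewrite gpow_cancel. reflexivity.
  - assert (Hw : walk adj p (i * L)) by (intros k _; apply Hadj).
    destruct (walk_enter_R h2 p (i * L) Hw) as [s [Hs Es]].
    + rewrite Hp0. exact Na.
    + apply C. unfold R. rewrite HpjL. apply P1. apply Ta_a.
    + exists (j * L), (S s). split.
      * unfold j. nia.
      * rewrite Es, Hinvh2, actM, HpjL. reflexivity.
  - exfalso. apply Nu0. apply C. exact Ru0.
  - exfalso. destruct (C a) as [Ca|Ca]; [|exact (Na Ca)].
    apply (Y_not_a i); [unfold i; lia|]. exact Ca.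
Qed.

End Chain.


Lemma Key : exists k, forall y, Ta y -> ~ Ta (act k y).
Proof.
  apply NNPP; intro Hno.
  assert (H0 : forall k, exists y, Ta y /\ Ta (act k y)).
  { intro k. apply NNPP. intro Hk. apply Hno. exists k. intros y Hy Hky. apply Hk. eauto. }
  assert (Hx : exists x, x <> one /\ Tb (act x a) /\ Tb (act x b)).
  { apply NNPP. intro HN.
    set (C := fun y => forall z, ~ Tb (act z y)).
    assert (Ca : C a).
    { intro z. destruct (classic (z = one)) as [->|Hz].
      - rewrite act1. intro H. apply (Ta_Tb_disj a). split; auto. apply Ta_a.
      - intro Hza. destruct (Ta_or_Tb (act z b)) as [Hzb|Hzb].
        + apply Hz. apply edge_cross_trivial'; auto. apply Tb_nTa. auto.
        + apply HN. exists z. auto. }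
    assert (Cb : C b).
    { apply Hminimal.
      - split; [exists a; exact Ca|].
        intros u v Cu Cv. destruct (exists_inj_walk u v) as [p [n [Hw [P0 [Pn Hinj]]]]].
        exists p, n. repeat split; auto.
        intros i Hi z Hz. apply (Tb_nTa _ Hz).
        apply (convex b a (fun k => act z (p k)) n Hba); auto.
        + apply walk_act; auto.
        + apply injw_act; auto.
        + simpl. rewrite P0. destruct (Ta_or_Tb (act z u)); auto. exfalso. apply (Cu z). auto.
        + simpl. rewrite Pn. destruct (Ta_or_Tb (act z v)); auto. exfalso. apply (Cv z). auto.
      - intros g v Cv z. rewrite <- actM. apply Cv. }
    apply (Cb one). rewrite act1. apply Tb_b. }
  destruct Hx as [x [Hx1 [Hxa Hxb]]].
  destruct (nesting a b (act x a) (act x b) Hab (actAdj x a b Hab) Hxa Hxb) as [N|N].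
  2: { destruct (H0 x) as [y [Hy Hxy]]. apply (Tb_nTa (act x y)); auto. apply N. apply Half_act. exact Hy. }
  assert (X1 : forall y, ~ Ta y -> ~ Ta (act x y)).
  { intros y Hy. apply Tb_nTa. apply N. apply Half_act. apply nTa_Tb. auto. }
  assert (X2 : ~ Ta (act x a)) by (apply Tb_nTa; auto).
  apply Hnfe. exact (chain_fixes_end x X1 X2 H0).
Qed.


Definition Aset (g : G) : Prop := Ta (act g a).
Definition SC (y y' : V) : Prop := ~ (Ta y <-> Ta y').

Lemma edge_unique g g0 y y' : isedge a b (act g y) (act g y') -> isedge a b (act g0 y) (act g0 y') -> g = g0.
Proof.
  intros H1 H2.
  assert (Hk : forall t, act (g ** ginv g0) (act g0 t) = act g t).
  { intro t. rewrite actM, act_inv_l. reflexivity. }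
  assert (E : g ** ginv g0 = one).
  { apply Hstab. unfold edge_stab, isedge in *.
    destruct H1 as [[A1 B1]|[A1 B1]]; destruct H2 as [[A2 B2]|[A2 B2]].
    - left. split; [rewrite <- A2 at 1| rewrite <- B2 at 1]; rewrite Hk; auto.
    - right. split; [rewrite <- B2 at 1| rewrite <- A2 at 1]; rewrite Hk; auto.
    - right. split; [rewrite <- A2 at 1| rewrite <- B2 at 1]; rewrite Hk; auto.
    - left. split; [rewrite <- B2 at 1| rewrite <- A2 at 1]; rewrite Hk; auto. }
  apply g_inv_unique in E. rewrite <- (g_inv_inv G g), <- E, g_inv_inv. reflexivity.
Qed.

Lemma FinCut (W : nat -> V) l : exists C : list G, forall g i, i < l ->
  isedge a b (act g (W i)) (act g (W (S i))) -> In g C.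
Proof.
  induction l.
  - exists nil. intros; lia.
  - destruct IHl as [C HC].
    destruct (classic (exists g0, isedge a b (act g0 (W l)) (act g0 (W (S l))))) as [[g0 Hg0]|Hno].
    + exists (g0 :: C). intros g i Hi He. destruct (Nat.eq_dec i l) as [->|Hne].
      * left. symmetry. eapply edge_unique; eauto.
      * right. apply (HC g i); auto. lia.
    + exists C. intros g i Hi He. destruct (Nat.eq_dec i l) as [->|Hne].
      * exfalso. apply Hno. eauto.
      * apply (HC g i); auto. lia.
Qed.

Lemma SC_cross p n : walk adj p n -> SC (p 0) (p n) -> exists i, i < n /\ isedge a b (p i) (p (S i)).
Proof.
  intros Hw Hsc. destruct (classic (Ta (p 0))) as [H0|H0].
  - assert (Hn : ~ Ta (p n)) by (intro Hn; apply Hsc; tauto).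
    destruct (walk_exit b a p n Hw H0 Hn) as [s [Hs [E1 E2]]].
    exists s. split; auto. left. auto.
  - assert (Hn : Ta (p n)) by (apply NNPP; intro Hn; apply Hsc; tauto).
    destruct (walk_enter b a p n Hw H0 Hn) as [s [Hs [E1 E2]]].
    exists s. split; auto. right. auto.
Qed.

Lemma SC_sym y y' : SC y y' -> SC y' y.
Proof. unfold SC. tauto. Qed.

Lemma GenCut (X : list G) : exists K : list G, forall x, In x X -> forall g,
  (SC (act g a) (act (g ** x) a) -> In g K) /\ (SC (act g a) (act (g ** ginv x) a) -> In g K).
Proof.
  induction X as [|x X IH].
  - exists nil. intros x [].
  - destruct IH as [K HK].
    destruct (conn a (act x a)) as [W [l [Hw [W0 Wl]]]].
    destruct (FinCut W l) as [Cx HCx].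
    assert (Hx : forall g, SC (act g a) (act (g ** x) a) -> In g Cx).
    { intros g Hsc.
      destruct (SC_cross (fun i => act g (W i)) l (walk_act g W l Hw)) as [i [Hi He]].
      - simpl. rewrite W0, Wl, <- actM. auto.
      - eapply HCx; eauto. }
    exists (Cx ++ map (fun c => c ** x) Cx ++ K).
    intros y [<-|Hy] g.
    + split; intro Hsc.
      * apply in_or_app. left. auto.
      * apply in_or_app. right. apply in_or_app. left.
        replace g with (g ** ginv x ** x) by apply g_mulVKr.
        apply (in_map (fun c => c ** x)). apply Hx. rewrite g_mulVKr. apply SC_sym. auto.
    + destruct (HK y Hy g) as [K1 K2]. split; intro Hsc; apply in_or_app; right; apply in_or_app; right; auto.
Qed.

Lemma WordCut (X K : list G) :
  (forall x, In x X -> forall g,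
    (SC (act g a) (act (g ** x) a) -> In g K) /\ (SC (act g a) (act (g ** ginv x) a) -> In g K)) ->
  forall w, word_over X w -> forall g, SC (act g a) (act (g ** word_eval w) a) ->
  exists c u, In c K /\ word_over X u /\ length u <= length w /\ g = c ** ginv (word_eval u).
Proof.
  intro HK. induction w as [|[x bb] w IH]; intros Hw g Hsc.
  - exfalso. apply Hsc. simpl. rewrite g_1r. tauto.
  - assert (Hx : In x X) by (apply (Hw (x, bb)); left; auto).
    assert (Hw' : word_over X w) by (intros t Ht; apply Hw; right; auto).
    set (x' := if bb then x else ginv x).
    assert (Ex : word_eval ((x, bb) :: w) = x' ** word_eval w) by reflexivity.
    rewrite Ex in Hsc.
    destruct (classic (SC (act g a) (act (g ** x') a))) as [H1|H1].
    + exists g, nil. repeat split.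
      * destruct (HK x Hx g) as [K1 K2]. unfold x' in H1. destruct bb; auto.
      * intros t [].
      * simpl. lia.
      * simpl. rewrite g_inv_one, g_1r. reflexivity.
    + assert (H2 : SC (act (g ** x') a) (act (g ** x' ** word_eval w) a)).
      { rewrite <- g_assoc. unfold SC in *. tauto. }
      destruct (IH Hw' (g ** x') H2) as [c [u [Hc [Hu [Hl Eg]]]]].
      exists c, ((x, bb) :: u). repeat split; auto.
      * intros t [<-|Ht]; [auto|apply Hu; auto].
      * simpl. lia.
      * change (word_eval ((x, bb) :: u)) with (x' ** word_eval u).
        rewrite g_inv_mul, g_assoc, <- Eg, g_mulKr. reflexivity.
Qed.

Lemma BallList (X : list G) n : exists Lb : list G, forall u, word_over X u -> length u <= n -> In (word_eval u) Lb.
Proof.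
  induction n.
  - exists [one]. intros u Hu Hl. destruct u; [left; reflexivity|simpl in Hl; lia].
  - destruct IHn as [Lb HL].
    exists (Lb ++ flat_map (fun x => map (fun y => x ** y) Lb ++ map (fun y => ginv x ** y) Lb) X).
    intros u Hu Hl. destruct u as [|[x bb] u].
    + apply in_or_app. left. apply HL; auto. simpl; lia.
    + apply in_or_app. right. apply in_flat_map. exists x. split.
      * apply (Hu (x, bb)). left; auto.
      * assert (Hin : In (word_eval u) Lb) by (apply HL; [intros t Ht; apply Hu; right; auto| simpl in Hl; lia]).
        apply in_or_app. destruct bb; [left|right]; simpl; apply in_map; auto.
Qed.

Lemma PathCut (X : list G) r : exists Cr : list G, forall f n, r_path X r f n ->
  Aset (f 0) -> ~ Aset (f n) -> exists i, i <= n /\ In (f i) Cr.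
Proof.
  destruct (GenCut X) as [K HK]. destruct (BallList X r) as [Lb HL].
  exists (flat_map (fun c => map (fun y => c ** ginv y) Lb) K).
  intros f n Hp H0 Hn.
  destruct (first_change (fun i => Aset (f i)) n H0 Hn) as [s [Hs [A1 A2]]].
  destruct (Hp s Hs) as [w [Hw [Hl Ew]]].
  assert (Ef : f (S s) = f s ** word_eval w) by (rewrite <- Ew, g_KV; reflexivity).
  destruct (WordCut X K HK w Hw (f s)) as [c [u [Hc [Hu [Hlu Eg]]]]].
  { rewrite <- Ef. unfold SC, Aset in *. tauto. }
  exists s. split; [lia|]. apply in_flat_map. exists c. split; auto.
  rewrite Eg. apply (in_map (fun y => c ** ginv y)). apply HL; auto. lia.
Qed.

Lemma inj_avoid (s : nat -> G) : (forall i j, s i = s j -> i = j) ->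
  forall l : list G, exists N0, forall n, N0 <= n -> ~ In (s n) l.
Proof.
  intros Hs l. induction l as [|c l IH].
  - exists 0. intros n _ [].
  - destruct IH as [N0 HN].
    destruct (classic (exists n0, s n0 = c)) as [[n0 En]|Hno].
    + exists (N0 + S n0). intros n Hn [E|E].
      * assert (n = n0) by (apply Hs; congruence). lia.
      * apply (HN n); auto. lia.
    + exists N0. intros n Hn [E|E]; [apply Hno; eauto| apply (HN n); auto].
Qed.

Lemma EventualSide (h : G) : (forall i j, gpow h i = gpow h j -> i = j) ->
  exists N0, forall n, N0 <= n -> (Aset (gpow h n) <-> Aset (gpow h N0)).
Proof.
  intro Hinj.
  destruct (conn a (act h a)) as [W [l [Hw [W0 Wl]]]].
  destruct (FinCut W l) as [Ch HCh].
  destruct (inj_avoid (gpow h) Hinj Ch) as [N0 HN0].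
  exists N0. intros n Hn. induction Hn; [tauto|].
  rewrite <- IHHn. apply NNPP. intro Hsc.
  apply (HN0 m); [lia|].
  destruct (SC_cross (fun i => act (gpow h m) (W i)) l (walk_act _ W l Hw)) as [i [Hi He]].
  - simpl. rewrite W0, Wl, <- actM, <- gpow_S_r. unfold SC, Aset in *. tauto.
  - eapply HCh; eauto.
Qed.

Lemma EllipticCosets (k m : G) :
  (forall y, Ta y -> ~ Ta (act k y)) -> (forall y, ~ Ta y -> Ta (act m y)) ->
  forall (v : V) (Hs : G -> Prop), (forall h, Hs h -> act h v = v) ->
  exists y1 y2, (forall h, Hs h -> ~ Aset (y1 ** h)) /\ (forall h, Hs h -> Aset (y2 ** h)).
Proof.
  intros Hk Hm v Hs Hfix.
  set (x := k ** m).
  assert (X1 : forall y, ~ Ta y -> ~ Ta (act x y)).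
  { intros y Hy. unfold x. rewrite actM. apply Hk. apply Hm. auto. }
  assert (Hma : Ta (act m a)).
  { apply NNPP. intro H. assert (Hmb : Ta (act m b)) by (apply Hm; apply Tb_nTa; apply Tb_b).
    assert (m = one) by (apply edge_cross_trivial'; auto).
    subst. rewrite act1 in Hmb. apply (Tb_nTa b Tb_b). auto. }
  assert (X2 : ~ Ta (act x a)) by (unfold x; rewrite actM; apply Hk; auto).
  destruct (Y_empty x X1 X2 v) as [J HJ].
  destruct (conn v a) as [W [d [Hw [W0 Wd]]]].
  set (M := d + 1 + J).
  exists (gpow x M), (m ** gpow x M).
  assert (Hy1 : forall h, Hs h -> ~ Aset (gpow x M ** h)).
  { intros h Hh HA. unfold Aset in HA. rewrite actM in HA.
    set (p := fun i => act (gpow x J) (act h (W i))).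
    assert (Hwp : walk adj p d) by (intros i Hi; unfold p; apply actAdj, actAdj, Hw; auto).
    assert (d + 1 <= d); [|lia].
    apply (Depth x X1 X2 (d + 1) d p Hwp).
    - unfold p. rewrite W0, Hfix by auto. rewrite (Y_shift x 1 J v). apply HJ. lia.
    - unfold p. rewrite Wd. apply (Y_shift x (d + 1) J). exact HA. }
  split; auto.
  intros h Hh. unfold Aset. rewrite <- g_assoc, actM. apply Hm. apply Hy1. auto.
Qed.


Lemma HuchaMain (k m : G) :
  (forall y, Ta y -> ~ Ta (act k y)) -> (forall y, ~ Ta y -> Ta (act m y)) ->
  (exists g : G, g <> one) ->
  Hucha (fun H : G -> Prop => subgroup H /\ (cyclic_subgroup H \/ acts_elliptically act H)).
Proof.
  intros Hk Hm [g0 Hg0] X HX P HP H [Hsub Hfam] r Hr.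
  assert (Hq : exists q, P q).
  { destruct HP as [_ [HP2 _]]. destruct (HP2 g0) as [A|[A|A]]; eauto. contradiction. }
  destruct Hq as [q Hq].
  destruct (PathCut X r) as [C HC].
  assert (Hk' : forall g, Aset g -> ~ Aset (k ** g)).
  { intros g Hg. unfold Aset. rewrite actM. apply Hk. auto. }
  assert (Hm' : forall g, ~ Aset g -> Aset (m ** g)).
  { intros g Hg. unfold Aset. rewrite actM. apply Hm. auto. }
  assert (Hcos : exists c1 c2 (Lc : list G), forall N', (forall l, In l Lc -> glt G P l N') ->
     forall x, H x -> (glt G P (c1 ** x) N' \/ Aset (c1 ** x)) /\ (glt G P (c2 ** x) N' \/ ~ Aset (c2 ** x))).
  { destruct Hfam as [[h Hh]|[v Hv]].
    - destruct (classic (h = one)) as [E|Hne].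
      + exists one, one, [one]. intros N' HN' x Hx.
        assert (Ex : x = one).
        { apply Hh in Hx. destruct Hx as [n [Ex|Ex]]; subst h; rewrite Ex; [|rewrite g_inv_one]; apply gpow_one. }
        subst x. rewrite g_1l. assert (glt G P one N') by (apply HN'; left; auto). split; left; auto.
      + assert (Hhat : exists hh, glt G P one hh /\ forall x, H x <-> exists n, x = gpow hh n \/ x = gpow (ginv hh) n).
        { destruct (glt_total G P HP one h (fun E => Hne (eq_sym E))) as [L|L].
          - exists h. split; auto.
          - exists (ginv h). split.
            + unfold glt in *. rewrite g_inv_one, g_1l. rewrite g_1r in L. auto.
            + intro x. rewrite Hh. rewrite g_inv_inv. split; intros [n [E|E]]; exists n; tauto. }
        destruct Hhat as [hh [Hhh Hdesc]].
        destruct (EventualSide hh (gpow_inj G P HP hh Hhh)) as [N0 HN0].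
        assert (Claim : forall c (Q : G -> Prop), (forall n, N0 <= n -> Q (c ** gpow hh n)) ->
                  forall N', glt G P (c ** gpow hh N0) N' -> forall x, H x -> glt G P (c ** x) N' \/ Q (c ** x)).
        { intros c Q HQ N' HN' x Hx. apply Hdesc in Hx. destruct Hx as [n [Ex|Ex]]; subst x.
          - destruct (le_lt_dec N0 n) as [Hn|Hn]; [right; auto|left].
            eapply glt_trans; eauto. apply glt_mul. apply gpow_glt; auto.
          - left. eapply gle_lt_trans; eauto. apply gle_mul.
            eapply gle_trans; eauto. apply gle_inv_pow; auto. apply gle_one_pow; auto. }
        destruct (classic (Aset (gpow hh N0))) as [HA|HA].
        * exists one, k, [one ** gpow hh N0; k ** gpow hh N0]. intros N' HN' x Hx. split.
          -- apply Claim; auto. intros n Hn. rewrite g_1l. apply HN0; auto. apply HN'. left; auto.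
          -- apply (Claim k (fun g => ~ Aset g)); auto. intros n Hn. apply Hk'. apply HN0; auto.
             apply HN'. right; left; auto.
        * exists m, one, [m ** gpow hh N0; one ** gpow hh N0]. intros N' HN' x Hx. split.
          -- apply Claim; auto. intros n Hn. apply Hm'. rewrite HN0; auto. apply HN'. left; auto.
          -- apply (Claim one (fun g => ~ Aset g)); auto. intros n Hn. rewrite g_1l, HN0; auto.
             apply HN'. right; left; auto.
    - destruct (EllipticCosets k m Hk Hm v H Hv) as [y1 [y2 [Y1 Y2]]].
      exists y2, y1, nil. intros N' _ x Hx. split; right; auto. }
  destruct Hcos as [c1 [c2 [Lc HLc]]].
  destruct (bound_list G P HP (C ++ Lc)) as [M HM].
  set (N' := M ** q).
  assert (HN' : forall l, In l (C ++ Lc) -> glt G P l N').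
  { intros l Hl. eapply gle_lt_trans; eauto. apply glt_mul_r_pos; auto. }
  destruct (unbounded G P HP Aset m q) with (N := N') as [al [Hal1 Hal2]]; auto.
  { intro g. destruct (classic (Aset g)); auto. }
  destruct (unbounded G P HP (fun g => ~ Aset g) k q) with (N := N') as [be [Hbe1 Hbe2]]; auto.
  { intro g. destruct (classic (Aset g)); auto. }
  assert (Tr : forall f n, r_path X r f n -> r_path X r (fun i => N' ** f i) n).
  { intros f n Hp i Hi. destruct (Hp i Hi) as [w [Hw [Hl Ew]]]. exists w. repeat split; auto.
    rewrite g_inv_mul, <- g_assoc, g_VK. auto. }
  assert (InC : forall z, In (N' ** z) C -> P (ginv z)).
  { intros z Hz. assert (L : glt G P (N' ** z) (N' ** one)).
    { rewrite g_1r. apply HN'. apply in_or_app. left. auto. }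
    apply glt_mul_inv in L. unfold glt in L. rewrite g_1r in L. auto. }
  assert (LtS : forall z, glt G P z N' -> P (ginv (ginv N' ** z))).
  { intros z Hz. apply (glt_mul G P (ginv N')) in Hz. rewrite g_Vl in Hz. unfold glt in Hz.
    rewrite g_1r in Hz. auto. }
  exists (fun s => P (ginv s)). split; [auto|split].
  - exists (ginv N' ** al), (ginv N' ** be). split; [|split].
    + apply Hal2.
    + apply Hbe2.
    + intros f n Hp E0 En.
      destruct (HC (fun i => N' ** f i) n (Tr f n Hp)) as [i [Hi Hin]].
      * simpl. rewrite E0, g_KV. auto.
      * simpl. rewrite En, g_KV. auto.
      * exists i. split; auto.
  - exists (ginv N' ** c1), (ginv N' ** c2). intros f n Hp [x [Hx E0]] [x' [Hx' En]].
    assert (HLc' : forall l, In l Lc -> glt G P l N') by (intros l Hl; apply HN'; apply in_or_app; right; auto).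
    destruct (HLc N' HLc' x Hx) as [[L1|A1] _].
    { exists 0. split; [lia|]. rewrite E0, <- g_assoc. apply LtS. auto. }
    destruct (HLc N' HLc' x' Hx') as [_ [L2|A2]].
    { exists n. split; [lia|]. rewrite En, <- g_assoc. apply LtS. auto. }
    destruct (HC (fun i => N' ** f i) n (Tr f n Hp)) as [i [Hi Hin]].
    + simpl. rewrite E0, <- g_assoc, g_KV. auto.
    + simpl. rewrite En, <- g_assoc, g_KV. auto.
    + exists i. split; auto.
Qed.

End Main.


Theorem proposition5p9 (G : Group) (V : Type) (adj : V -> V -> Prop)
  (act : G -> V -> V)
  (HT : simplicial_tree adj)
  (Hact : tree_action adj act)
  (Hfg : finitely_generated G)
  (Hlo : left_orderable G)
  (Hcof : cofinite_action adj act)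
  (Hmin : minimal_action adj act)
  (Hgen : general_type adj act)
  (Hedge : exists u v, adj u v /\ forall g, edge_stab act u v g -> g = gone G)
  (Hvst : forall v, fg_subgroup (vertex_stab act v)) :
  Hucha (fun H : G -> Prop =>
           subgroup H /\ (cyclic_subgroup H \/ acts_elliptically act H)).
Proof.
  destruct HT as [Hsym [Hirr [Hconn Hnocyc]]].
  destruct Hact as [Hact1 [HactM [HactAdj _]]].
  destruct Hgen as [Hnfv [Hnfe _]].
  destruct Hedge as [a [b [Hab Hstab]]].
  assert (Hba : adj b a) by (apply Hsym; auto).
  assert (Hstab' : forall g, edge_stab act b a g -> g = gone G).
  { intros g Hg. apply Hstab. unfold edge_stab in *. tauto. }
  destruct (Key G V adj act Hsym Hirr Hconn Hnocyc Hact1 HactM HactAdj Hmin Hnfe a b Hab Hstab) as [k Hk].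
  destruct (Key G V adj act Hsym Hirr Hconn Hnocyc Hact1 HactM HactAdj Hmin Hnfe b a Hba Hstab') as [m Hm].
  assert (Hm' : forall y, ~ Ta V adj a b y -> Ta V adj a b (act m y)).
  { intros y Hy. apply (nTa_Tb V adj Hsym Hconn a b Hab y) in Hy.
    apply (nTa_Tb V adj Hsym Hconn b a Hba). apply Hm. exact Hy. }
  assert (Hnt : exists g : G, g <> gone G).
  { apply Classical_Prop.NNPP. intro Hno. apply Hnfv. exists a. intro g.
    assert (g = gone G) by (apply Classical_Prop.NNPP; intro H; apply Hno; eauto).
    subst. apply Hact1. }
  exact (HuchaMain G V adj act Hsym Hirr Hconn Hnocyc Hact1 HactM HactAdj a b Hab Hstab k m Hk Hm' Hnt).
Qed.
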